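(* In the single expert committee under liquid democracy, there is a neutral strategy profile that maximizes the probability that the outcome matches the state among all neutral strategy profiles and under which (1) the expert votes sincerely, and (2) $1\le v_e\le\min\{\lfloor w^*\rfloor,\ (N+1)/2\}$, where $v_e$ is the number of votes the expert holds and $w^*=\log\big(\tfrac{r}{1-r}\big)/\log\big(\tfrac{q}{1-q}\big)$.
   Context: Single expert committee: $N$ voters with $N$ odd, all independent (payoff 1 if the outcome matches the state, $A$ with $a$ and $B$ with $b$, else 0); $N-1$ nonexperts of precision $q\in(1/2,1)$ and one expert $e$ of precision $r\in(q,1)$; prior $\Pr(\omega=a)=1/2$ for state $\omega\in\{a,b\}$; voter $i$ observes private signal $s_i$ with $\Pr(s_i=\omega\mid\omega)=q_i$, conditionally independent; precisions are common knowledge. Outcome: simple majority of votes cast, ties broken uniformly at random. Liquid democracy: each voter maps her signal to vote $A$, vote $B$, abstain, or delegate to another voter; delegation is transitive, votes in a delegation cycle are abstained, and a non-delegator casts all votes she holds (own plus delegated) for the same alternative or abstains them all. A strategy profile is neutral if each voter votes sincerely ($a$ at signal $a$, $b$ at signal $b$), abstains at both signals, or delegates to the same voter at both signals. The number of votes a voter holds is her own vote (if she does not delegate) plus all votes delegated to her directly or transitively. *)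

(* Defs.v *)
From HB Require Import structures.
From mathcomp Require Import all_boot all_order all_algebra.
From mathcomp Require Import reals exp.
Set Implicit Arguments. Unset Strict Implicit. Unset Printing Implicit Defensive.
Import Order.TTheory GRing.Theory Num.Theory.
Local Open Scope ring_scope.

(* States / signals / alternatives encoded as bool: true = a (resp. A), false = b (resp. B). *)

(* A neutral strategy of a voter: vote sincerely (A at signal a, B at signal b),
   abstain at both signals, or delegate to the same voter at both signals. *)
Inductive naction (N : nat) : Type :=
| Sincere
| Abstain
| Delegate of 'I_N.
Arguments Sincere {N}.
Arguments Abstain {N}.

Definition nprofile (N : nat) := 'I_N -> naction N.

Definition valid_profile N (p : nprofile N) : Prop :=
  forall i : 'I_N, p i <> Delegate i.

Definition dnext N (p : nprofile N) (i : 'I_N) : 'I_N :=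
  match p i with Delegate j => j | _ => i end.

Definition is_sincere N (p : nprofile N) (i : 'I_N) : bool :=
  if p i is Sincere then true else false.

Definition is_delegator N (p : nprofile N) (i : 'I_N) : bool :=
  if p i is Delegate _ then true else false.

(* Final holder of voter j's vote under transitive delegation, or None if the
   delegation chain of j ends in a cycle (in which case the vote is abstained).
   After N steps a chain without cycle has reached its non-delegating end. *)
Definition terminal N (p : nprofile N) (j : 'I_N) : option 'I_N :=
  let t := iter N (dnext p) j in
  if is_delegator p t then None else Some t.

Definition votes_held N (p : nprofile N) (i : 'I_N) : nat :=
  #|[set j : 'I_N | terminal p j == Some i]|.

Definition tally N (p : nprofile N) (s : {ffun 'I_N -> bool}) (x : bool) : nat :=
  \sum_(j : 'I_N)
     (if terminal p j is Some t then is_sincere p t && (s t == x) else false : nat).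

Section Prob.
Variable R : realType.

Definition precision N (e : 'I_N) (q r : R) (i : 'I_N) : R :=
  if i == e then r else q.

Definition sig_prob N (e : 'I_N) (q r : R) (w : bool) (s : {ffun 'I_N -> bool}) : R :=
  \prod_(i : 'I_N)
     (if s i == w then precision e q r i else 1 - precision e q r i).

(* Probability that the simple-majority outcome (ties broken uniformly at random)
   equals the state w, given the vote counts. *)
Definition correct_prob (w : bool) (nA nB : nat) : R :=
  let (nw, nl) := if w then (nA, nB) else (nB, nA) in
  if (nl < nw)%N then 1 else if nw == nl then 2^-1 else 0.

(* Probability that the outcome matches the state under neutral profile p,
   with uniform prior on the state. *)
Definition success_prob N (e : 'I_N) (q r : R) (p : nprofile N) : R :=
  \sum_(w : bool) 2^-1 *
    \sum_(s : {ffun 'I_N -> bool})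
       sig_prob e q r w s * correct_prob w (tally p s true) (tally p s false).

Definition wstar (q r : R) : R := ln (r / (1 - r)) / ln (q / (1 - q)).
End Prob.

(* Main.v *)
Require Import Defs.
From HB Require Import structures.
From mathcomp Require Import all_boot all_order all_algebra.
From mathcomp Require Import reals exp.
From mathcomp Require Import zify ring lra.
Import Order.TTheory GRing.Theory Num.Theory.
Local Open Scope ring_scope.

Lemma avg_le (R : realFieldType) (a b c : R) : a + a = b + c -> b <= a -> a <= c.
Proof. move=> *; lra. Qed.
Lemma avg_or (R : realFieldType) (a b c B C : R) :
  a + a = b + c -> b <= B -> c <= C -> a <= B \/ a <= C.
Proof.
move=> h1 h2 h3; case: (lerP a B) => h; [by left | right; lra].
Qed.

Section Main.
Variable R : realType.
Variable N : nat.
Variable e : 'I_N.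
Variables q r : R.
Hypothesis oddN : odd N.
Hypothesis hq : 2^-1 < q.
Hypothesis hqr : q < r.
Hypothesis hr : r < 1.

Definition prec (i : 'I_N) : R := precision e q r i.
Definition fp (i : 'I_N) (b : bool) : R := if b then prec i else 1 - prec i.
Definition Pr (x : {ffun 'I_N -> bool}) : R := \prod_i fp i (x i).
Definition Cw (w : 'I_N -> nat) (x : {ffun 'I_N -> bool}) : nat :=
  (\sum_i w i * x i)%N.
Definition Ww (w : 'I_N -> nat) (x : {ffun 'I_N -> bool}) : nat :=
  (\sum_i w i * ~~ x i)%N.
Definition Hw (w : 'I_N -> nat) x : R := correct_prob R true (Cw w x) (Ww w x).
Definition Psi (w : 'I_N -> nat) : R := \sum_x Pr x * Hw w x.
Definition wt (p : nprofile N) (i : 'I_N) : nat :=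
  if is_sincere p i then votes_held p i else 0%N.

Lemma tallyE p s b : Defs.tally p s b = (\sum_t wt p t * (s t == b))%N.
Proof.
rewrite /Defs.tally.
transitivity (\sum_j \sum_t ((terminal p j == Some t) * (is_sincere p t && (s t == b))))%N.
  apply: eq_bigr => j _.
  case: (terminal p j) => [t0|]; last by rewrite big1.
  rewrite (bigD1 t0) //= eqxx mul1n big1 ?addn0 // => i /negbTE ni.
  by rewrite (inj_eq (@Some_inj _)) eq_sym ni.
rewrite exchange_big /=; apply: eq_bigr => t _.
rewrite -big_distrl /= /wt /votes_held.
case: (is_sincere p t) => /=; last by rewrite !muln0 ?mul0n.
congr (_ * _)%N.
rewrite -sum1_card [in RHS]big_mkcond /=; apply: eq_bigr => j _; rewrite inE; by case: ifP.
Qed.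

Lemma successE p : success_prob e q r p = Psi (wt p).
Proof.
rewrite /success_prob big_bool /=.
have -> : \sum_s sig_prob e q r true s * correct_prob R true (Defs.tally p s true) (Defs.tally p s false)
   = Psi (wt p).
  apply: eq_bigr => s _; congr (_ * _).
    by apply: eq_bigr => i _; rewrite /fp /prec; case: (s i).
  rewrite /Hw /Cw /Ww !tallyE; congr correct_prob; apply: eq_bigr => i _;
    by case: (s i).
have -> : \sum_s sig_prob e q r false s * correct_prob R false (Defs.tally p s true) (Defs.tally p s false)
   = Psi (wt p).
  rewrite (reindex_inj (h := fun x : {ffun 'I_N -> bool} => [ffun i => ~~ x i])); last first.
    by move=> x y /ffunP H; apply/ffunP => i; move: (H i); rewrite !ffunE => /negb_inj.
  apply: eq_bigr => s _; congr (_ * _).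
    by apply: eq_bigr => i _; rewrite /fp /prec ffunE; case: (s i).
  rewrite /Hw /Cw /Ww !tallyE /correct_prob.
  have -> : (\sum_t wt p t * ([ffun i => ~~ s i] t == true))%N = (\sum_i wt p i * ~~ s i)%N.
    by apply: eq_bigr => i _; rewrite ffunE; case: (s i).
  have -> : (\sum_t wt p t * ([ffun i => ~~ s i] t == false))%N = (\sum_i wt p i * s i)%N.
    by apply: eq_bigr => i _; rewrite ffunE; case: (s i).
  by [].
by rewrite -mulrDr; field.
Qed.


Lemma q_gt0 : 0 < q. Proof. by apply: lt_trans hq; rewrite invr_gt0. Qed.
Lemma q_lt1 : q < 1. Proof. exact: lt_trans hqr hr. Qed.
Lemma r_gt0 : 0 < r. Proof. have := hqr; have := q_gt0; move=> *; lra. Qed.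

Lemma prec_gt0 i : 0 < prec i.
Proof. rewrite /prec /precision; case: ifP => _; [exact: r_gt0 | exact: q_gt0]. Qed.
Lemma prec_lt1 i : prec i < 1.
Proof. rewrite /prec /precision; case: ifP => _; [exact: hr | exact: q_lt1]. Qed.
Lemma fp_gt0 i b : 0 < fp i b.
Proof. have := prec_gt0 i; have := prec_lt1 i; rewrite /fp; case: b; lra. Qed.
Lemma fp_ge0 i b : 0 <= fp i b.
Proof. exact/ltW/fp_gt0. Qed.

Definition flip (U : {set 'I_N}) (x : {ffun 'I_N -> bool}) : {ffun 'I_N -> bool} :=
  [ffun i => if i \in U then ~~ x i else x i].
Definition QU (U : {set 'I_N}) x : R := \prod_(i in U) fp i (x i).
Definition BU (U : {set 'I_N}) x : R := \prod_(i | i \notin U) fp i (x i).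

Lemma flipK U : cancel (flip U) (flip U).
Proof. by move=> x; apply/ffunP => i; rewrite !ffunE; case: (i \in U) => //; rewrite negbK. Qed.

Lemma Pr_split U x : Pr x = QU U x * BU U x.
Proof. by rewrite /Pr (bigID (mem U)). Qed.

Lemma BU_flip U x : BU U (flip U x) = BU U x.
Proof. by apply: eq_bigr => i /negbTE iU; rewrite ffunE iU. Qed.

Lemma BU_ge0 U x : 0 <= BU U x.
Proof. by apply: prodr_ge0 => i _; exact: fp_ge0. Qed.

Lemma cp_sym a b : correct_prob R true b a = 1 - correct_prob R true a b.
Proof.
rewrite /correct_prob /=; case: (ltngtP a b) => h; rewrite ?subr0 ?subrr //.
by field.
Qed.

Lemma Hw_flip w (U : {set 'I_N}) x : (forall i, i \notin U -> w i = 0%N) ->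
  Hw w (flip U x) = 1 - Hw w x.
Proof.
move=> sw; rewrite /Hw.
have -> : Cw w (flip U x) = Ww w x.
  apply: eq_bigr => i _; rewrite ffunE; case: ifP => [//|/negbT /sw ->].
  by rewrite !mul0n.
have -> : Ww w (flip U x) = Cw w x.
  apply: eq_bigr => i _; rewrite ffunE; case: ifP => [_|/negbT /sw ->]; last by rewrite !mul0n.
  by rewrite negbK.
exact: cp_sym.
Qed.

Lemma DC (w w' : 'I_N -> nat) (U : {set 'I_N}) : (forall i, i \notin U -> w i = 0%N) -> (forall i, i \notin U -> w' i = 0%N) ->
  (forall x : {ffun 'I_N -> bool}, QU U (flip U x) < QU U x -> Hw w x <= Hw w' x) ->
  (forall x : {ffun 'I_N -> bool}, QU U x < QU U (flip U x) -> Hw w' x <= Hw w x) -> Psi w <= Psi w'.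
Proof.
move=> sw sw' h1 h2.
pose g x := Hw w' x - Hw w x.
have gf x : g (flip U x) = - g x.
  by rewrite /g (Hw_flip _ _ _ sw) (Hw_flip _ _ _ sw'); ring.
have S : Psi w' - Psi w = \sum_x Pr x * g x.
  by rewrite /Psi -sumrB; apply: eq_bigr => x _; rewrite /g mulrBr.
have S2 : \sum_x Pr x * g x = - \sum_x Pr (flip U x) * g x.
  rewrite (reindex_inj (can_inj (flipK U))) -sumrN; apply: eq_bigr => x _.
  by rewrite gf mulrN.
have S3 : (Psi w' - Psi w) *+ 2 = \sum_x (Pr x - Pr (flip U x)) * g x.
  rewrite mulr2n S {2}S2 -sumrB; apply: eq_bigr => x _; by rewrite mulrBl.
rewrite -subr_ge0 -(pmulrn_lge0 _ (isT : (0 < 2)%N)) S3.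
apply: sumr_ge0 => x _.
rewrite (Pr_split U x) (Pr_split U (flip U x)) BU_flip -mulrBl.
rewrite [_ * BU U x]mulrC -mulrA; apply: mulr_ge0; first exact: BU_ge0.
rewrite /g; case: (ltgtP (QU U (flip U x)) (QU U x)) => h.
- by apply: mulr_ge0; rewrite subr_ge0 ?(ltW h) //; apply: h1.
- by apply: mulr_le0; rewrite subr_le0 ?(ltW h) //; apply: h2.
- by rewrite h subrr mul0r.
Qed.


Lemma ln_prod (I : finType) (P : pred I) (F : I -> R) :
  (forall i, P i -> 0 < F i) -> ln (\prod_(i | P i) F i) = \sum_(i | P i) ln (F i).
Proof.
move=> hF.
suff : 0 < \prod_(i | P i) F i /\ ln (\prod_(i | P i) F i) = \sum_(i | P i) ln (F i) by case.
apply: (big_ind2 (fun a b => 0 < a /\ ln a = b)).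
- by rewrite ln1.
- move=> a b c d [ha hb] [hc hd]; split; first exact: mulr_gt0.
  by rewrite lnM ?posrE // hb hd.
- by move=> i Pi; split; [exact: hF|].
Qed.

Lemma intr_sum (I : finType) (P : pred I) (F : I -> int) :
  ((\sum_(i | P i) F i)%:~R : R) = \sum_(i | P i) (F i)%:~R.
Proof. by apply: (big_morph (fun z : int => (z%:~R : R))) => [a b|]; rewrite ?intrD. Qed.

Definition eps (x : {ffun 'I_N -> bool}) (i : 'I_N) : int := if x i then 1 else -1.
Definition nK (K : {set 'I_N}) (x : {ffun 'I_N -> bool}) : int := \sum_(i in K) eps x i.
Definition Wst : R := wstar q r.
Definition lam (i : 'I_N) : R := ln (prec i / (1 - prec i)).
Definition Lq : R := ln (q / (1 - q)).
Definition Lr : R := ln (r / (1 - r)).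
Definition Lx (K : {set 'I_N}) x : R := (eps x e)%:~R * Wst + (nK K x)%:~R.

Lemma lnodds (p : R) : 0 < p -> p < 1 -> ln (p / (1 - p)) = ln p - ln (1 - p).
Proof.
move=> h0 h1; have h2 : 0 < 1 - p by rewrite subr_gt0.
by rewrite lnM ?posrE ?invr_gt0 // lnV ?posrE.
Qed.

Lemma Lq_gt0 : 0 < Lq.
Proof.
apply: ln_gt0; have h := q_lt1; have h0 := q_gt0; have hq' := hq.
rewrite ltr_pdivlMr ?subr_gt0 // mul1r.
move=> *; lra.
Qed.

Lemma Lr_gt_Lq : Lq < Lr.
Proof.
have h := q_lt1; have h0 := q_gt0; have h3 := r_gt0; have h4 := hr; have h5 := hqr.
rewrite /Lq /Lr !lnodds //.
have : ln q < ln r by rewrite ltr_ln ?posrE.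
have : ln (1 - r) < ln (1 - q) by rewrite ltr_ln ?posrE ?subr_gt0 //; lra.
move=> *; lra.
Qed.

Lemma Wst_gt1 : 1 < Wst.
Proof.
rewrite /Wst /wstar -/Lq -/Lr ltr_pdivlMr ?Lq_gt0 // mul1r; exact: Lr_gt_Lq.
Qed.

Lemma lam_e : lam e = Lr. Proof. by rewrite /lam /prec /precision eqxx. Qed.
Lemma lam_ne i : i != e -> lam i = Lq.
Proof. by move=> /negbTE h; rewrite /lam /prec /precision h. Qed.

Lemma lnfp i b : ln (fp i b) - ln (fp i (~~ b)) = (if b then 1 else -1) * lam i.
Proof.
rewrite /lam lnodds ?prec_gt0 ?prec_lt1 //; case: b => /=; first by rewrite mul1r.
by rewrite mulN1r opprB.
Qed.

Lemma QU_ln (K : {set 'I_N}) (x : {ffun 'I_N -> bool}) : e \notin K ->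
  ln (QU (e |: K) x) - ln (QU (e |: K) (flip (e |: K) x)) = Lq * Lx K x.
Proof.
move=> eK; rewrite /QU !ln_prod; try by move=> *; apply: fp_gt0.
rewrite -sumrB.
rewrite (eq_bigr (fun i => (eps x i)%:~R * lam i)); last first.
  by move=> i iU; rewrite ffunE iU lnfp /eps; case: (x i).
rewrite big_setU1 //= lam_e.
rewrite (eq_bigr (fun i => (eps x i)%:~R * Lq)); last first.
  by move=> i iK; rewrite lam_ne //; apply: contraNneq eK => <-.
rewrite -big_distrl /= -intr_sum -/(nK K x) /Lx /Wst /wstar -/Lq -/Lr.
have := Lq_gt0; rewrite lt0r => /andP [/negPf hL _].
field; by rewrite hL.
Qed.

Lemma QU_pos (U : {set 'I_N}) (x : {ffun 'I_N -> bool}) : 0 < QU U x.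
Proof. by apply: prodr_gt0 => i _; exact: fp_gt0. Qed.

Lemma sign1 (K : {set 'I_N}) (x : {ffun 'I_N -> bool}) : e \notin K ->
  QU (e |: K) (flip (e |: K) x) < QU (e |: K) x -> 0 < Lx K x.
Proof.
move=> eK; rewrite -ltr_ln ?posrE ?QU_pos // -subr_gt0 QU_ln //.
by rewrite pmulr_rgt0 // Lq_gt0.
Qed.

Lemma sign2 (K : {set 'I_N}) (x : {ffun 'I_N -> bool}) : e \notin K ->
  QU (e |: K) x < QU (e |: K) (flip (e |: K) x) -> Lx K x < 0.
Proof.
move=> eK; rewrite -ltr_ln ?posrE ?QU_pos // -subr_lt0 QU_ln //.
by rewrite pmulr_rlt0 // Lq_gt0.
Qed.


Lemma DC2 (w w' : 'I_N -> nat) (K : {set 'I_N}) : e \notin K ->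
  (forall i, i != e -> i \notin K -> w i = 0%N) ->
  (forall i, i != e -> i \notin K -> w' i = 0%N) ->
  (forall x, 0 < Lx K x -> Hw w x <= Hw w' x) ->
  (forall x, Lx K x < 0 -> Hw w' x <= Hw w x) -> Psi w <= Psi w'.
Proof.
move=> eK sw sw' h1 h2; apply: (@DC w w' (e |: K)).
- by move=> i; rewrite in_setU1 negb_or => /andP [] /sw; apply.
- by move=> i; rewrite in_setU1 negb_or => /andP [] /sw'; apply.
- by move=> x /(sign1 _ _ eK) /h1.
- by move=> x /(sign2 _ _ eK) /h2.
Qed.

Definition Hh (z : int) : R := if 0 < z then 1 else if z == 0 then 2^-1 else 0.
Definition marg (w : 'I_N -> nat) (x : {ffun 'I_N -> bool}) : int :=
  \sum_i (w i)%:Z * eps x i.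

Lemma Posz_sum (I : finType) (P : pred I) (F : I -> nat) :
  ((\sum_(i | P i) F i)%N%:Z) = \sum_(i | P i) (F i)%:Z.
Proof. by apply: (big_morph Posz) => [a b|]; rewrite ?PoszD. Qed.

Lemma Hw_marg (w : 'I_N -> nat) (x : {ffun 'I_N -> bool}) : Hw w x = Hh (marg w x).
Proof.
have -> : marg w x = (Cw w x)%:Z - (Ww w x)%:Z.
  rewrite /Cw /Ww !Posz_sum -sumrB; apply: eq_bigr => i _.
  by rewrite /eps; case: (x i); rewrite /= ?muln1 ?muln0 ?mulr1 ?subr0 ?sub0r ?mulrN1.
rewrite /Hw /correct_prob /Hh /= subr_gt0 ltz_nat subr_eq0.
by [].
Qed.

Lemma marg_split (w : 'I_N -> nat) (K : {set 'I_N}) (x : {ffun 'I_N -> bool}) : e \notin K ->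
  (forall i, i != e -> i \notin K -> w i = 0%N) ->
  marg w x = (w e)%:Z * eps x e + \sum_(i in K) (w i)%:Z * eps x i.
Proof.
move=> eK sw; rewrite /marg (bigID (mem (e |: K))) /= [X in _ + X]big1 ?addr0.
  by rewrite big_setU1.
by move=> i; rewrite in_setU1 negb_or => /andP [] /sw h /h ->; rewrite mul0r.
Qed.

Definition Gw (t : nat) (K : {set 'I_N}) (i : 'I_N) : nat :=
  if i == e then t else if i \in K then 1%N else 0%N.

Lemma Gw_supp t (K : {set 'I_N}) (i : 'I_N) : i != e -> i \notin K -> Gw t K i = 0%N.
Proof. by rewrite /Gw => /negbTE -> /negbTE ->. Qed.

Lemma marg_G t (K : {set 'I_N}) (x : {ffun 'I_N -> bool}) : e \notin K -> marg (Gw t K) x = t%:Z * eps x e + nK K x.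
Proof.
move=> eK; rewrite (marg_split _ _ _ eK); last exact: Gw_supp.
rewrite /Gw eqxx; congr (_ + _); apply: eq_bigr => i iK.
by rewrite iK; case: eqP => [ie|_]; [rewrite -ie iK in eK | rewrite mul1r].
Qed.

Lemma Hh_pos (z : int) : 0 < z -> Hh z = 1. Proof. by rewrite /Hh => ->. Qed.
Lemma Hh_neg (z : int) : z < 0 -> Hh z = 0.
Proof. by move=> h; rewrite /Hh ltNge (ltW h) /= lt_eqF. Qed.
Lemma Hh_ge0 (z : int) : 0 <= Hh z.
Proof. by rewrite /Hh; case: ifP => _ //; case: ifP => _ //; rewrite invr_ge0 ler0n. Qed.
Lemma Hh_le1 (z : int) : Hh z <= 1.
Proof.
rewrite /Hh; case: ifP => _ //; case: ifP => _ //.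
by rewrite invf_le1 ?ler1n // ltr0n.
Qed.
Lemma Hh_mono (z1 z2 : int) : z1 <= z2 -> Hh z1 <= Hh z2.
Proof.
move=> h; case: (ltgtP z2 0) => h2.
- by rewrite !Hh_neg //; apply: le_lt_trans h2.
- by rewrite (Hh_pos _ h2); exact: Hh_le1.
- case: (ltgtP z1 0) => h1; first by rewrite (Hh_neg _ h1); exact: Hh_ge0.
  + by move: h; rewrite h2 => /(lt_le_trans h1); rewrite ltxx.
  + by rewrite h1 h2.
Qed.
Lemma Hh_opp (z : int) : Hh (- z) = 1 - Hh z.
Proof.
case: (ltgtP z 0) => h.
- by rewrite Hh_pos ?oppr_gt0 // Hh_neg // subr0.
- by rewrite Hh_neg ?oppr_lt0 // Hh_pos // subrr.
- rewrite h oppr0 /Hh ltxx eqxx; by field.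
Qed.
Lemma Hh_avg (b : int) : Hh (b *+ 2) *+ 2 = Hh (b *+ 2 - 1) + Hh (b *+ 2 + 1).
Proof.
case: (ltgtP b 0) => h.
- rewrite !Hh_neg ?mul0rn ?addr0 //; lia.
- rewrite !Hh_pos ?mulr2n //; lia.
- rewrite h mul0rn /Hh /= add0r -mulr_natr; by field.
Qed.

Lemma nK_par (K : {set 'I_N}) (x : {ffun 'I_N -> bool}) :
  nK K x = (\sum_(i in K) (x i : nat))%N%:Z *+ 2 - #|K|%:Z /\
  ((\sum_(i in K) (x i : nat)) <= #|K|)%N.
Proof.
split; last first.
  by rewrite -sum1_card; apply: leq_sum => i _; case: (x i).
rewrite /nK Posz_sum -sum1_card Posz_sum -sumrMnl -sumrB; apply: eq_bigr => i _.
by rewrite /eps; case: (x i).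
Qed.


Definition fwn : nat := `|Num.floor Wst|%N.

Lemma floor_ge1 : 1 <= Num.floor Wst.
Proof. by rewrite leNgt floor_lt_int ltNge (ltW Wst_gt1). Qed.

Lemma fwn_Z : (fwn%:Z) = Num.floor Wst.
Proof. by rewrite /fwn gez0_abs // (le_trans _ floor_ge1). Qed.

Lemma fwn_ge1 : (1 <= fwn)%N.
Proof. by have := floor_ge1; rewrite -fwn_Z lez_nat. Qed.

Lemma fwn_le : (fwn%:R : R) <= Wst.
Proof. by rewrite pmulrn fwn_Z; exact: floor_le. Qed.

Lemma fwn_gt : Wst < fwn%:R + 1.
Proof.
have := ltzD1 (Num.floor Wst) (Num.floor Wst); rewrite lexx floor_lt_int.
by rewrite -fwn_Z intrD -pmulrn.
Qed.

Lemma W_pos_int (n : int) : 0 < Wst + n%:~R -> 0 <= fwn%:Z + n.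
Proof.
move=> h; rewrite leNgt; apply/negP => h2.
have : n <= - (fwn%:Z) - 1 by lia.
rewrite -(@ler_int R) intrB intrN -pmulrn => h3.
have := fwn_gt; move: h h3; rewrite ?mulr1z; clear h2; move=> *; lra.
Qed.

Lemma W_neg_int (n : int) : Wst + n%:~R < 0 -> fwn%:Z + n < 0.
Proof.
move=> h; rewrite ltNge; apply/negP => h2.
have : - (fwn%:Z) <= n by lia.
rewrite -(@ler_int R) intrN -pmulrn => h3.
have := fwn_le; move: h h3; clear h2; move=> *; lra.
Qed.

Definition tsel (a D k : nat) : nat :=
  let ts := if odd (fwn + k) then fwn else fwn.+1 in
  if a + D == 0 then 1%N else if (a + D < ts)%N then (a + D)%N
  else if (ts < a - D)%N then (a - D)%N else ts.

Lemma tsel_bounds a D k : (1 <= tsel a D k)%N /\ (tsel a D k <= maxn 1 (a + D))%N.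
Proof.
have h1 := fwn_ge1; rewrite /tsel; case: (odd _);
repeat (case: ifP => /=); move=> *; lia.
Qed.

Lemma core (a D k c : nat) (s : int) : (c <= k)%N -> - (D%:Z) <= s <= D%:Z ->
  (0 <= fwn%:Z + (c%:Z + c%:Z - k%:Z) ->
     Hh (a%:Z + (c%:Z + c%:Z - k%:Z) + s) <= Hh ((tsel a D k)%:Z + (c%:Z + c%:Z - k%:Z))) /\
  (fwn%:Z + (c%:Z + c%:Z - k%:Z) < 0 ->
     Hh ((tsel a D k)%:Z + (c%:Z + c%:Z - k%:Z)) <= Hh (a%:Z + (c%:Z + c%:Z - k%:Z) + s)).
Proof.
move=> ck /andP [s1 s2].
have h1 := fwn_ge1.
have par : exists m, (if odd (fwn + k) then fwn else fwn.+1) + k = m.*2.+1.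
  have := odd_double_half (fwn + k); case: (odd _) => /=;
  set m := (_./2); rewrite -!muln2 => h; exists m; lia.
case: par => m hm.
set t := tsel a D k.
have F1 : 0 <= fwn%:Z + (c%:Z + c%:Z - k%:Z) -> 
          0 < t%:Z + (c%:Z + c%:Z - k%:Z) \/ (a + D <= t)%N.
  rewrite /t /tsel; move: hm; case: (odd _) => hm;
  repeat (case: ifP => /=); move=> *; lia.
have F2 : fwn%:Z + (c%:Z + c%:Z - k%:Z) < 0 -> 
          t%:Z + (c%:Z + c%:Z - k%:Z) < 0 \/ (t%:Z <= a%:Z - D%:Z).
  rewrite /t /tsel; move: hm; case: (odd _) => hm;
  repeat (case: ifP => /=); move=> *; lia.
split.
- move=> /F1 [h|h]; first by rewrite (Hh_pos _ h); exact: Hh_le1.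
  apply: Hh_mono; lia.
- move=> /F2 [h|h]; first by rewrite (Hh_neg _ h); exact: Hh_ge0.
  apply: Hh_mono; lia.
Qed.


Definition Dw (w : 'I_N -> nat) (K : {set 'I_N}) : nat :=
  (\sum_(i in K) ((w i - 1) + (1 - w i)))%N.

Lemma s_bound (v : nat) (b : bool) :
  - (((v - 1) + (1 - v))%N%:Z) <= v%:Z * (if b then 1 else -1) - (if b then 1 else -1)
  <= ((v - 1) + (1 - v))%N%:Z.
Proof. case: b; apply/andP; split; lia. Qed.

Lemma stepG_pt (w : 'I_N -> nat) (K : {set 'I_N}) (x : {ffun 'I_N -> bool}) :
  e \notin K -> (forall i, i != e -> i \notin K -> w i = 0%N) ->
  let t := tsel (w e) (Dw w K) #|K| in
  (0 < Lx K x -> Hw w x <= Hw (Gw t K) x) /\ (Lx K x < 0 -> Hw (Gw t K) x <= Hw w x).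
Proof.
move=> eK sw t; rewrite {}/t.
rewrite !Hw_marg (marg_split _ _ _ eK sw) marg_G //.
have [hn hc] := nK_par K x.
set c := (\sum_(i in K) _)%N in hn hc.
set k := #|K| in hn hc *.
set D := Dw w K.
set s := \sum_(i in K) (w i)%:Z * eps x i - nK K x.
have hs : - (D%:Z) <= s <= D%:Z.
  have -> : s = \sum_(i in K) ((w i)%:Z * eps x i - eps x i) by rewrite /s sumrB.
  rewrite /D /Dw Posz_sum -sumrN; apply/andP; split; apply: ler_sum => i _;
    have /andP [] := s_bound (w i) (x i); by rewrite /eps.
have E : \sum_(i in K) (w i)%:Z * eps x i = nK K x + s by rewrite /s addrC subrK.
rewrite E /Lx hn mulr2n.
have [C1 C2] := core (w e) D k c s hc hs.
have hs' : - (D%:Z) <= - s <= D%:Z.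
  by move: hs => /andP [h1 h2]; apply/andP; split; lia.
have [C3 C4] := core (w e) D k (k - c) (- s) (leq_subr _ _) hs'.
rewrite /eps; case: (x e).
- have e3 : (w e)%:Z * 1 + (c%:Z + c%:Z - k%:Z + s) = (w e)%:Z + (c%:Z + c%:Z - k%:Z) + s by lia.
  have e4 : (tsel (w e) D k)%:Z * 1 + (c%:Z + c%:Z - k%:Z) = (tsel (w e) D k)%:Z + (c%:Z + c%:Z - k%:Z) by lia.
  rewrite e3 e4 mulr1z mul1r.
  by split => h; [apply: C1; apply: W_pos_int | apply: C2; apply: W_neg_int].
- have -> : ((-1 : int)%:~R : R) = -1 by rewrite mulrN1z.
  rewrite mulN1r.
  have En : ((k - c)%N%:Z + (k - c)%N%:Z - k%:Z) = - (c%:Z + c%:Z - k%:Z) by lia.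
  rewrite En in C3 C4.
  have e1 : (w e)%:Z * -1 + (c%:Z + c%:Z - k%:Z + s) =
            - ((w e)%:Z + - (c%:Z + c%:Z - k%:Z) - s) by lia.
  have e2 : (tsel (w e) D k)%:Z * -1 + (c%:Z + c%:Z - k%:Z) =
            - ((tsel (w e) D k)%:Z + - (c%:Z + c%:Z - k%:Z)) by lia.
  rewrite e1 e2 !Hh_opp.
  split => h.
  + rewrite lerD2l lerN2; apply: C4; apply: W_neg_int.
    by rewrite mulrNz -oppr_gt0 opprD opprK.
  + rewrite lerD2l lerN2; apply: C3; apply: W_pos_int.
    by rewrite mulrNz -oppr_lt0 opprD opprK.
Qed.


Lemma stepG (w : 'I_N -> nat) (K : {set 'I_N}) : e \notin K ->
  (forall i, i != e -> i \notin K -> w i = 0%N) ->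
  exists t : nat, [/\ (1 <= t)%N, (t <= maxn 1 (w e + Dw w K))%N & Psi w <= Psi (Gw t K)].
Proof.
move=> eK sw; have [b1 b2] := tsel_bounds (w e) (Dw w K) #|K|.
exists (tsel (w e) (Dw w K) #|K|); split => //.
apply: (@DC2 _ _ K) => //.
- exact: Gw_supp.
- by move=> x; have [] := stepG_pt _ _ x eK sw.
- by move=> x; have [] := stepG_pt _ _ x eK sw.
Qed.

Lemma exists_j (K : {set 'I_N}) : e \notin K -> (#|K|.+1 < N)%N ->
  exists j, (j != e) && (j \notin K).
Proof.
move=> eK hK.
case: (pickP [pred j | (j != e) && (j \notin K)]) => [j hj | h]; first by exists j.
have : (N <= #|e |: K|)%N.
  rewrite -{1}(card_ord N); apply: subset_leq_card; apply/subsetP => j _.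
  rewrite in_setU1; move: (h j) => /= /negbT; rewrite negb_and !negbK; by case/orP => ->; rewrite ?orbT.
rewrite cardsU1 eK /= add1n => hN; by move: (leq_trans hK hN); rewrite ltnn.
Qed.

Lemma Gw_e t (K : {set 'I_N}) : Gw t K e = t.
Proof. by rewrite /Gw eqxx. Qed.

Lemma step2a t (K : {set 'I_N}) : e \notin K -> (1 <= t)%N -> (t + #|K| + 2 <= N)%N ->
  exists t' (K1 : {set 'I_N}), [/\ e \notin K1, #|K1| = #|K|.+1, (1 <= t')%N, (t' + #|K1| <= N)%N &
                   Psi (Gw t K) <= Psi (Gw t' K1)].
Proof.
move=> eK ht htk.
have hK : (#|K|.+1 < N)%N by lia.
have [j /andP [je jK]] := exists_j K eK hK.
have eK1 : e \notin j |: K by rewrite in_setU1 negb_or eq_sym je.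
have sw : forall i, i != e -> i \notin j |: K -> Gw t K i = 0%N.
  by move=> i ie; rewrite in_setU1 negb_or => /andP [_ iK]; rewrite Gw_supp.
have [t' [h1 h2 h3]] := stepG _ _ eK1 sw.
have cK1 : #|j |: K| = #|K|.+1 by rewrite cardsU1 jK.
have hD : Dw (Gw t K) (j |: K) = 1%N.
  rewrite /Dw big_setU1 //= big1 ?addn0.
    by rewrite /Gw (negbTE je) (negbTE jK).
  move=> i iK; rewrite /Gw iK; case: eqP => [ie|_] //.
  by rewrite -ie iK in eK.
move: h2; rewrite hD Gw_e => h2.
exists t', (j |: K); split => //; rewrite cK1; lia.
Qed.

Lemma Psi_avg t (K : {set 'I_N}) : e \notin K -> ~~ odd (t.+1 + #|K|) ->
  Psi (Gw t.+1 K) + Psi (Gw t.+1 K) = Psi (Gw t K) + Psi (Gw t.+2 K).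
Proof.
move=> eK hodd.
rewrite /Psi -!big_split; apply: eq_bigr => x _ /=; rewrite -!mulrDr; congr (_ * _).
rewrite !Hw_marg !marg_G //.
have [hn hc] := nK_par K x.
rewrite hn mulr2n.
have := odd_double_half (t.+1 + #|K|); rewrite (negbTE hodd) add0n -muln2 => hm.
set m := (_./2) in hm.
have Hav : forall z b : int, z = b + b -> Hh z + Hh z = Hh (z - 1) + Hh (z + 1).
  move=> z b ->; have := Hh_avg b; by rewrite !mulr2n.
set c := (\sum_(i in K) _)%N in hc *.
set k := #|K| in hm hc *.
set z := (c%:Z + c%:Z - k%:Z).
rewrite /eps; case: (x e).
- have E2 : t%:Z * 1 + z = (t.+1%:Z * 1 + z) - 1 by lia.
  have E3 : t.+2%:Z * 1 + z = (t.+1%:Z * 1 + z) + 1 by lia.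
  rewrite E2 E3; apply: (Hav _ (m%:Z + c%:Z - k%:Z)); rewrite /z; lia.
- have E2 : t%:Z * -1 + z = (t.+1%:Z * -1 + z) + 1 by lia.
  have E3 : t.+2%:Z * -1 + z = (t.+1%:Z * -1 + z) - 1 by lia.
  rewrite E2 E3 [RHS]addrC; apply: (Hav _ (c%:Z - m%:Z)); rewrite /z; lia.
Qed.


Lemma G01 (K : {set 'I_N}) : e \notin K -> Psi (Gw 0 K) <= Psi (Gw 1 K).
Proof.
move=> eK; have [t [h1 h2 h3]] := stepG _ _ eK (@Gw_supp 0 K).
have hD : Dw (Gw 0 K) K = 0%N.
  rewrite /Dw big1 // => i iK; rewrite /Gw iK; case: eqP => [ie|_] //.
  by rewrite -ie iK in eK.
move: h2; rewrite hD Gw_e => h2.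
have -> : 1%N = t by apply/eqP; rewrite eqn_leq h1 h2.
exact: h3.
Qed.

Lemma chain d : forall (K : {set 'I_N}) t, (N - #|K| <= d)%N -> e \notin K ->
  (1 <= t)%N -> (t + #|K| <= N)%N ->
  exists c (K' : {set 'I_N}),
    [/\ e \notin K', (1 <= c)%N, c + #|K'| = N & Psi (Gw t K) <= Psi (Gw c K')].
Proof.
elim: d => [|d IH] K t hd eK ht htk; first by exfalso; lia.
have A2 : forall t0, (1 <= t0)%N -> (t0 + #|K| + 2 <= N)%N ->
    exists c (K' : {set 'I_N}),
    [/\ e \notin K', (1 <= c)%N, c + #|K'| = N & Psi (Gw t0 K) <= Psi (Gw c K')].
  move=> t0 h0 h1; have [t' [K1 [eK1 cK1 h2 h3 h4]]] := step2a _ _ eK h0 h1.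
  have hd1 : (N - #|K1| <= d)%N by rewrite cK1; lia.
  have [c [K' [h5 h6 h7 h8]]] := IH K1 t' hd1 eK1 h2 h3.
  by exists c, K'; split => //; exact: le_trans h4 h8.
case: (ltngtP (t + #|K|) N) => h; last first.
- by exists t, K; split.
- by exfalso; lia.
case: (ltngtP (t + #|K|).+1 N) => h'.
- by apply: A2 => //; lia.
- by exfalso; lia.
case: t ht htk h h' => [//|t0] _ htk h h'.
have hN : odd (t0.+1 + #|K|).+1 by rewrite h'.
have hp : ~~ odd (t0.+1 + #|K|) by move: hN => /=.
have Hav := Psi_avg _ _ eK hp.
have C2 : t0.+2 + #|K| = N by lia.
clear hN; case: t0 Hav htk h h' hp C2 => [|t1] Hav htk h h' hp C2.
- exists 2%N, K; split => //.
  exact: (avg_le _ _ _ _ Hav (G01 _ eK)).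
- have h5 : (t1.+1 + #|K| + 2 <= N)%N by lia.
  have [c1 [K1 [h1 h2 h3 h4]]] := A2 t1.+1 isT h5.
  have [H|H] := avg_or _ _ _ _ _ _ Hav h4 (lexx (Psi (Gw t1.+3 K))).
  + by exists c1, K1.
  + by exists t1.+3, K.
Qed.


Lemma Hh_le_of (z1 z2 : int) : z1 <= z2 \/ z1 < 0 \/ 0 < z2 -> Hh z1 <= Hh z2.
Proof.
case=> [h|[h|h]]; first exact: Hh_mono.
- by rewrite (Hh_neg _ h); exact: Hh_ge0.
- by rewrite (Hh_pos _ h); exact: Hh_le1.
Qed.

Lemma R1 (c : nat) (y : int) : 0 < Wst + y%:~R -> Wst <= c%:R -> 0 < c%:Z + y.
Proof.
move=> h1 h2; rewrite -(ltr0z R) intrD -pmulrn.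
by apply: lt_le_trans h1 _; rewrite lerD2r.
Qed.

Lemma R2 (c : nat) (y : int) : - Wst + y%:~R < 0 -> Wst <= c%:R -> y < c%:Z.
Proof.
move=> h1 h2; rewrite -(ltr_int R) -pmulrn.
apply: lt_le_trans h2; by rewrite -subr_lt0 addrC.
Qed.

Lemma desc_pt c0 (K : {set 'I_N}) j (x : {ffun 'I_N -> bool}) :
  e \notin K -> j != e -> j \notin K -> c0.+1 + #|K| = N ->
  (Wst <= c0.+1%:R \/ (N.+1 < c0.+1.*2)%N) ->
  (0 < Lx (j |: K) x -> Hw (Gw c0.+1 K) x <= Hw (Gw c0 (j |: K)) x) /\
  (Lx (j |: K) x < 0 -> Hw (Gw c0 (j |: K)) x <= Hw (Gw c0.+1 K) x).
Proof.
move=> eK je jK hN hc.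
have eK1 : e \notin j |: K by rewrite in_setU1 negb_or eq_sym je.
rewrite !Hw_marg !marg_G // /Lx /nK big_setU1 //= -/(nK K x).
have [hn hcc] := nK_par K x; rewrite hn mulr2n.
set c := (\sum_(i in K) _)%N in hcc *.
set k := #|K| in hN hcc *.
have := odd_double_half N; rewrite oddN -muln2; set M := N./2 => hM.
have hc' : (Wst <= c0.+1%:R) \/ (N.+1 < c0.+1 * 2)%N by rewrite -muln2 in hc.
clear hc.
rewrite /eps; case: (x e); case: (x j).
- split=> _; apply: Hh_le_of; lia.
- split=> h; apply: Hh_le_of; last by lia.
  have F : 0 < c0.+1%:Z + (-1 + (c%:Z + c%:Z - k%:Z)) \/ (N.+1 < c0.+1 * 2)%N.
    case: hc' => [hW|]; last by right.
    by left; apply: R1 hW; rewrite mulr1z mul1r in h.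
  lia.
- split=> h; apply: Hh_le_of; first by lia.
  have F : (1 + (c%:Z + c%:Z - k%:Z)) < c0.+1%:Z \/ (N.+1 < c0.+1 * 2)%N.
    case: hc' => [hW|]; last by right.
    by left; apply: R2 hW; rewrite mulrN1z mulN1r in h.
  lia.
- split=> _; apply: Hh_le_of; lia.
Qed.


Definition mm : nat := minn fwn (N.+1)./2.

Lemma mm_ge1 : (1 <= mm)%N.
Proof.
have := fwn_ge1; have := odd_double_half N; rewrite oddN -muln2 => hM.
rewrite /mm leq_min => ->.
have -> : N.+1 = (N./2).+1.*2 by rewrite -muln2; lia.
by rewrite doubleK.
Qed.

Lemma desc_step c0 (K : {set 'I_N}) j :
  e \notin K -> j != e -> j \notin K -> c0.+1 + #|K| = N ->
  (Wst <= c0.+1%:R \/ (N.+1 < c0.+1.*2)%N) ->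
  Psi (Gw c0.+1 K) <= Psi (Gw c0 (j |: K)).
Proof.
move=> eK je jK hN hc.
have eK1 : e \notin j |: K by rewrite in_setU1 negb_or eq_sym je.
apply: (@DC2 _ _ (j |: K)) => //.
- by move=> i ie; rewrite in_setU1 negb_or => /andP [_ iK]; rewrite Gw_supp.
- exact: Gw_supp.
- by move=> x; have [] := desc_pt _ _ _ x eK je jK hN hc.
- by move=> x; have [] := desc_pt _ _ _ x eK je jK hN hc.
Qed.

Lemma descent c : forall (K : {set 'I_N}), e \notin K -> (1 <= c)%N -> c + #|K| = N ->
  exists c' (K' : {set 'I_N}),
    [/\ e \notin K', (1 <= c')%N, (c' <= mm)%N, c' + #|K'| = N & Psi (Gw c K) <= Psi (Gw c' K')].
Proof.
elim: c => [//|c0 IH] K eK _ hN.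
case: (leqP c0.+1 mm) => hm; first by exists c0.+1, K; split.
have hm1 := mm_ge1.
have hK : (#|K|.+1 < N)%N by lia.
have [j /andP [je jK]] := exists_j K eK hK.
have hc : Wst <= c0.+1%:R \/ (N.+1 < c0.+1.*2)%N.
  move: hm; rewrite /mm gtn_min => /orP [h|h].
    left; apply: ltW; apply: lt_le_trans fwn_gt _.
    by rewrite -natr1 lerD2r ler_nat -ltnS.
  right; have := odd_double_half N; rewrite oddN -muln2 => hM.
  move: h; have -> : N.+1 = (N./2).+1.*2 by rewrite -muln2; lia.
  rewrite doubleK -!muln2; lia.
have Hs := desc_step _ _ _ eK je jK hN hc.
have eK1 : e \notin j |: K by rewrite in_setU1 negb_or eq_sym je.
have hN1 : (c0 + #|j |: K|)%N = N by rewrite cardsU1 jK /= add1n addnS; exact: hN.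
have h0 : (1 <= c0)%N by lia.
have [c' [K' [h1 h2 h3 h4 h5]]] := IH _ eK1 h0 hN1.
by exists c', K'; split => //; exact: le_trans Hs h5.
Qed.


Definition prof (K : {set 'I_N}) : nprofile N :=
  fun i => if i == e then Sincere else if i \in K then Sincere else Delegate e.

Lemma prof_valid K : valid_profile (prof K).
Proof.
move=> i; rewrite /prof; case: eqP => [_|ie] //; case: (i \in K) => //.
by case=> h; apply: ie; rewrite h.
Qed.

Lemma iter_fixd (p : nprofile N) n j : dnext p j = j -> iter n (dnext p) j = j.
Proof. by move=> h; elim: n => //= n ->. Qed.

Lemma iter_pred (T : Type) n (f : T -> T) x : (0 < n)%N -> iter n f x = iter n.-1 f (f x).
Proof. by case: n => // n _; rewrite iterSr. Qed.

Lemma N_gt0 : (0 < N)%N.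
Proof. by case: e => i /=; case: N => [//|]. Qed.

Lemma prof_term (K : {set 'I_N}) j : e \notin K ->
  terminal (prof K) j = if (j == e) || (j \in K) then Some j else Some e.
Proof.
move=> eK; rewrite /terminal; case h: ((j == e) || (j \in K)).
- rewrite iter_fixd; last by rewrite /dnext /prof; case: (j == e) h => //= ->.
  by rewrite /is_delegator /prof; case: (j == e) h => //= ->.
- have dj : dnext (prof K) j = e.
    by rewrite /dnext /prof; move: h => /norP [/negbTE -> /negbTE ->].
  have de : dnext (prof K) e = e by rewrite /dnext /prof eqxx.
  rewrite (iter_pred _ _ _ _ N_gt0) dj iter_fixd //.
  by rewrite /is_delegator /prof eqxx.
Qed.

Lemma votes_e (K : {set 'I_N}) : e \notin K -> votes_held (prof K) e = (N - #|K|)%N.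
Proof.
move=> eK; rewrite /votes_held.
have -> : [set j | terminal (prof K) j == Some e] = ~: K.
  apply/setP => j; rewrite !inE prof_term //; case: (eqVneq j e) => [->|je] /=.
    by rewrite eqxx (negbTE eK).
  case: (boolP (j \in K)) => jK /=; last by rewrite eqxx.
  by rewrite (inj_eq (@Some_inj _)) (negbTE je).
have h := cardsC K; rewrite card_ord in h; move: h; move: (#|K|) (#|~: K|) => a b <-; by rewrite addKn.
Qed.

Lemma votes_K (K : {set 'I_N}) i : e \notin K -> i \in K -> votes_held (prof K) i = 1%N.
Proof.
move=> eK iK; rewrite /votes_held.
have ie : i != e by apply: contraNneq eK => <-.
have -> : [set j | terminal (prof K) j == Some i] = [set i].
  apply/setP => j; rewrite !inE prof_term //.
  case: ifP => hj; first by rewrite (inj_eq (@Some_inj _)).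
  rewrite (inj_eq (@Some_inj _)) eq_sym (negbTE ie).
  by apply/esym/negbTE/eqP => ji; move: hj; rewrite ji iK orbT.
by rewrite cards1.
Qed.

Lemma wt_prof (K : {set 'I_N}) : e \notin K -> forall i, wt (prof K) i = Gw (N - #|K|) K i.
Proof.
move=> eK i; rewrite /wt /Gw /is_sincere; case: (eqVneq i e) => [->|ie].
  by rewrite /prof eqxx votes_e.
rewrite /prof (negbTE ie); case: (boolP (i \in K)) => iK //.
exact: votes_K.
Qed.

Lemma Psi_ext (w w' : 'I_N -> nat) : (forall i, w i = w' i) -> Psi w = Psi w'.
Proof.
move=> h; rewrite /Psi; apply: eq_bigr => x _.
have e1 : Cw w x = Cw w' x by apply: eq_bigr => i _; rewrite h.
have e2 : Ww w x = Ww w' x by apply: eq_bigr => i _; rewrite h.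
by rewrite /Hw e1 e2.
Qed.

Lemma sum_wt (p : nprofile N) : (\sum_i wt p i <= N)%N.
Proof.
apply: (@leq_trans (\sum_i votes_held p i)).
  by apply: leq_sum => i _; rewrite /wt; case: ifP.
have -> : (\sum_i votes_held p i = \sum_i \sum_j (terminal p j == Some i))%N.
  apply: eq_bigr => i _; rewrite /votes_held -sum1_card [in LHS]big_mkcond /=.
  by apply: eq_bigr => j _; rewrite inE; case: ifP.
rewrite exchange_big /=.
apply: (@leq_trans (\sum_(j < N) 1)%N); last by rewrite sum1_card card_ord.
apply: leq_sum => j _.
case: (terminal p j) => [t0|]; last by rewrite big1.
rewrite (bigD1 t0) //= eqxx big1 ?addn0 // => i /negbTE ni.
by rewrite (inj_eq (@Some_inj _)) eq_sym ni.
Qed.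


Lemma main_sec : exists p : nprofile N,
    [/\ valid_profile p,
        (forall p' : nprofile N, valid_profile p' ->
           success_prob e q r p' <= success_prob e q r p),
        p e = Sincere,
        (1 <= votes_held p e)%N &
        ((votes_held p e)%:Z <= Num.floor (wstar q r))%R
          /\ (votes_held p e <= (N.+1)./2)%N].
Proof.
pose P := fun K : {set 'I_N} => (e \notin K) && (1 <= N - #|K|)%N && (N - #|K| <= mm)%N.
pose F := fun K : {set 'I_N} => Psi (Gw (N - #|K|) K).
have P0 : P [set~ e].
  rewrite /P !inE eqxx /= cardsC1 card_ord.
  have := N_gt0; have := mm_ge1; move=> *; apply/andP; split; lia.
have [K0 PK0 maxK0] := arg_maxP F P0.
move: PK0 => /andP [/andP [eK0 h1] h2].
have ve := votes_e _ eK0.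
exists (prof K0); split.
- exact: prof_valid.
- move=> p' _; rewrite !successE (Psi_ext _ _ (wt_prof _ eK0)).
  set w := wt p'.
  pose K := [set i | (i != e) && (0 < w i)%N].
  have eK : e \notin K by rewrite inE eqxx.
  have sw : forall i, i != e -> i \notin K -> w i = 0%N.
    by move=> i ie; rewrite inE ie /= -leqNgt leqn0 => /eqP.
  have [t [ht1 ht2 hPsi]] := stepG w K eK sw.
  have hK : (#|K| <= N.-1)%N.
    have := cardsC1 e; rewrite card_ord => <-; apply: subset_leq_card; apply/subsetP => i.
    by rewrite !inE => /andP [].
  have hD : (w e + Dw w K + #|K| <= N)%N.
    have E1 : (Dw w K + #|K| = \sum_(i in K) w i)%N.
      rewrite /Dw -sum1_card -big_split /=; apply: eq_bigr => i.
      rewrite inE => /andP [_ hi]; lia.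
    rewrite -addnA E1; apply: leq_trans (sum_wt p').
    rewrite [in X in (_ <= X)%N](bigID (mem (e |: K))) /= big_setU1 //=.
    exact: leq_addr.
  have htk : (t + #|K| <= N)%N.
    have := N_gt0; move: ht2; rewrite /maxn; case: ifP => _ *; lia.
  have [c [K' [eK' hc hcK hP1]]] := chain (N - #|K|) K t (leqnn _) eK ht1 htk.
  have [c' [K'' [eK'' hc'1 hc'm hc'K hP2]]] := descent c K' eK' hc hcK.
  have E2 : (N - #|K''|)%N = c' by move: hc'K; move: (#|K''|) => a <-; rewrite addnK.
  have PK'' : P K'' by rewrite /P eK'' E2 hc'1 hc'm.
  have := maxK0 K'' PK''; rewrite /F E2 => hmax.
  exact: le_trans hPsi (le_trans hP1 (le_trans hP2 hmax)).
- by rewrite /prof eqxx.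
- by rewrite ve.
- rewrite ve; split.
    rewrite -fwn_Z lez_nat; exact: leq_trans h2 (geq_minl _ _).
  exact: leq_trans h2 (geq_minr _ _).
Qed.

End Main.

Theorem lemma5 (R : realType) (N : nat) (e : 'I_N) (q r : R) :
  odd N ->
  2^-1 < q -> q < r -> r < 1 ->
  exists p : nprofile N,
    [/\ valid_profile p,
        (forall p' : nprofile N, valid_profile p' ->
           success_prob e q r p' <= success_prob e q r p),
        p e = Sincere,
        (1 <= votes_held p e)%N &
        ((votes_held p e)%:Z <= Num.floor (wstar q r))%R
          /\ (votes_held p e <= (N.+1)./2)%N].
Proof. move=> oN hq hqr hr; exact: (@main_sec R N e q r oN hq hqr hr). Qed.
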